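(* Let $n$ be a positive integer and let $K$ and $L$ be number fields of degree $n$, both Galois over $\mathbb{Q}$, contained in a fixed algebraic closure of $\mathbb{Q}$. If $\delta_{K,L}>1-\frac{2}{n^2}$, then $K=L$.
   Context: $\widetilde E$ denotes the Galois closure of a number field $E$ over $\mathbb{Q}$ and $\widetilde K\widetilde L$ the compositum; $\delta_{K,L}:=\frac{2}{[\widetilde K\widetilde L:\mathbb{Q}]}+1-\frac{1}{[\widetilde K:\mathbb{Q}]}-\frac{1}{[\widetilde L:\mathbb{Q}]}$. *)

(* Defs.v *)
From HB Require Import structures.
From mathcomp Require Import all_boot all_order all_algebra all_fingroup all_field.
Set Implicit Arguments. Unset Strict Implicit. Unset Printing Implicit Defensive.
Import GRing.Theory Num.Theory.
Local Open Scope ring_scope.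

(* Number fields are subfields K : {subfield L0} of a finite Galois (splitting)
   extension L0 of Q; L0 plays the role of the fixed algebraic closure
   (any finitely many number fields and their Galois closures lie in one). *)

Definition gal_closure (L0 : splittingFieldType rat) (K : {subfield L0})
  : {vspace L0} :=
  agenv (\sum_(g in 'Gal({:L0} / 1%AS)%G) (g @: K))%VS.

Definition compositum (L0 : splittingFieldType rat) (U V : {vspace L0})
  : {vspace L0} := agenv (U + V)%VS.

Definition delta (L0 : splittingFieldType rat) (K L : {subfield L0}) : rat :=
  2 / (\dim (compositum (gal_closure K) (gal_closure L)))%:R + 1
  - 1 / (\dim (gal_closure K))%:R - 1 / (\dim (gal_closure L))%:R.

(* Main.v *)
Require Import Defs.
From HB Require Import structures.
From mathcomp Require Import all_boot all_order all_algebra all_fingroup all_field.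
From mathcomp Require Import ring lra zify.
Import GRing.Theory Num.Theory.
Local Open Scope ring_scope.

Lemma gc_id (L0 : splittingFieldType rat) (K : {subfield L0}) :
  galois 1%AS K -> gal_closure K = K.
Proof.
move=> /and3P[_ _ nK].
have gK : forall g, g \in 'Gal({:L0} / 1%AS)%G -> (g @: K)%VS = K.
  move=> g Hg.
  have hk : kAut 1%AS {:L0} g by rewrite -gal_kAut ?sub1v.
  have := normalField_kAut (M := K) _ nK hk.
  by rewrite sub1v subvf => /(_ isT) /andP[_ /eqP].
rewrite /gal_closure.
have -> : (\sum_(g in 'Gal({:L0} / 1%AS)%G) (g @: K))%VS = K.
  apply/eqP; rewrite eqEsubv; apply/andP; split.
    by apply/subv_sumP => g Hg; rewrite gK.
  by apply: (sumv_sup 1%g); rewrite ?group1 // gK ?group1.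
exact: subfield_closed.
Qed.

Theorem theorem3p7 (L0 : splittingFieldType rat) (n : nat) (K L : {subfield L0}) :
  (0 < n)%N ->
  \dim K = n -> \dim L = n ->
  galois 1%AS K -> galois 1%AS L ->
  delta K L > 1 - 2 / (n ^ 2)%:R ->
  K = L.
Proof.
move=> n0 dK dL gKK gLL.
rewrite /delta !gc_id // dK dL.
set C := compositum _ _.
have KC : (K <= C)%VS by apply: subv_trans (sub_agenv _); apply: addvSl.
have LC : (L <= C)%VS by apply: subv_trans (sub_agenv _); apply: addvSr.
have [n1|n2] := eqVneq n 1%N.
  move=> _.
  have e1 : forall M : {subfield L0}, \dim M = n -> (M : {vspace L0}) = 1%VS.
    move=> M dM; apply/esym/eqP; rewrite eqEdim sub1v dimv1 dM n1 //.
  have EK := e1 K dK; have EL := e1 L dL.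
  have : asval K = asval L by rewrite EK EL.
  exact: val_inj.
have dvd : (n %| \dim C)%N by rewrite -dK; apply: field_dimS.
have nC : (n <= \dim C)%N by rewrite -dK; apply: dimvS.
have [eC|neC] := eqVneq (\dim C) n.
  move=> _.
  have hC : forall M : {subfield L0}, \dim M = n -> (M <= C)%VS -> (M : {vspace L0}) = C.
    move=> M dM MC; apply/eqP; by rewrite eqEdim MC dM eC leqnn.
  have : asval K = asval L by rewrite (hC K) // (hC L).
  exact: val_inj.
move: dvd nC neC; set c := \dim C => dvd nC neC.
have c2 : (2 * n <= c)%N.
  move: dvd => /dvdnP [k hk]; rewrite hk in nC neC *.
  case: k hk nC neC => [|[|k]] hk nC neC.
  - by rewrite mul0n leqn0 in nC; rewrite (eqP nC) in n0.
  - by rewrite mul1n eqxx in neC.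
  - rewrite leq_mul2r; apply/orP; right; by [].
move=> H; exfalso.
have n2' : (1 < n)%N by rewrite ltn_neqAle eq_sym n2.
move: H; rewrite natrX.
have ha : (2 : rat) <= n%:R by rewrite (ler_nat rat 2 n).
have hb : 2 * (n%:R : rat) <= c%:R by rewrite -natrM ler_nat.
move: ha hb; clear -n2'.
set a : rat := n%:R; set b : rat := c%:R => ha hb.
have a0 : 0 < a by lra.
have b0 : 0 < b by lra.
have hx : a^-1 <= 2^-1 by rewrite lef_pV2 ?posrE //; lra.
have hy : b^-1 <= (2 * a)^-1 by rewrite lef_pV2 ?posrE //; lra.
rewrite invfM in hy.
have x0 : 0 < a^-1 by rewrite invr_gt0.
rewrite !div1r -exprVn.
move: hx hy x0; set x := a^-1; set y := b^-1 => hx hy x0.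
rewrite expr2 => H.
nra.
Qed.
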